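(* Let $C\subset V(\tfrac12 H^{0}_{24})$ be a union of spheres such that $\chi_C$ is a perfect coloring of $\tfrac12 H^{0}_{24}$ with parameters $((20+c,\,256-c)(c,\,276-c))$. Then either $c$ is divisible by $3$ or $c\ge 25$.
   Context: $E^{24}$ is the set of binary words of length $24$ with Hamming distance. $\tfrac12 H^{0}_{24}$ is the graph on even-weight words of $E^{24}$, adjacent iff at Hamming distance exactly $2$ (degree $276$). A sphere is a set $S\subset V(\tfrac12 H^{0}_{24})$ consisting of all $24$ words at Hamming distance $1$ from some odd-weight word (its center). For a set $C$ with $\emptyset\ne C\subsetneq V$, $\chi_C$ is a perfect coloring with parameters $((a,b)(c,d))$ if every vertex of $C$ has exactly $a$ neighbours in $C$ and $b$ outside, and every vertex outside $C$ has exactly $c$ neighbours in $C$ and $d$ outside. *)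

(* Defs.v *)
From mathcomp Require Import all_boot.
Set Implicit Arguments. Unset Strict Implicit. Unset Printing Implicit Defensive.

Definition word := {ffun 'I_24 -> bool}.

Definition wt (x : word) : nat := #|[set i | x i]|.
Definition hdist (x y : word) : nat := #|[set i | x i != y i]|.

(* Vertex set of 1/2 H^0_24 : even-weight words *)
Definition V : {set word} := [set x | ~~ odd (wt x)].

Definition adj (x y : word) : bool := hdist x y == 2.

Definition nbrs_in (A : {set word}) (x : word) : nat := #|[set y in A | adj x y]|.

Definition sphere (z : word) : {set word} := [set x | hdist x z == 1].

Definition union_of_spheres (C : {set word}) : Prop :=
  exists Z : {set word}, (forall z, z \in Z -> odd (wt z)) /\
                         C = \bigcup_(z in Z) sphere z.

Definition perfect_coloring (C : {set word}) (a b c d : nat) : Prop :=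
  [/\ C \subset V, C != set0, C != V,
      (forall x, x \in C -> nbrs_in C x = a /\ nbrs_in (V :\: C) x = b) &
      (forall x, x \in V :\: C -> nbrs_in C x = c /\ nbrs_in (V :\: C) x = d)].

(* Main.v *)
Require Import Defs.
From mathcomp Require Import all_boot.
Set Implicit Arguments. Unset Strict Implicit. Unset Printing Implicit Defensive.

Definition flip (x : word) (i : 'I_24) : word :=
  [ffun k => if k == i then ~~ x k else x k].

Lemma flipE x i k : flip x i k = if k == i then ~~ x k else x k.
Proof. by rewrite ffunE. Qed.

Lemma flipK x i : flip (flip x i) i = x.
Proof.
apply/ffunP=> k; rewrite !flipE; case: (k =P i) => //= _; by rewrite negbK.
Qed.

Lemma flip_inj z : injective (flip z).
Proof.
move=> k k' /ffunP /(_ k); rewrite !flipE eqxx.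
case: (k =P k') => [//|_]; by case: (z k).
Qed.

Lemma hdist_sym x y : hdist x y = hdist y x.
Proof. rewrite /hdist; apply: eq_card => k; by rewrite !inE eq_sym. Qed.

Lemma hdist0 z : hdist z z = 0.
Proof.
rewrite /hdist; apply/eqP; rewrite cards_eq0; apply/eqP/setP=> k; by rewrite !inE eqxx.
Qed.

Lemma hdist_flip x y i :
  hdist x (flip y i) = if x i == y i then (hdist x y).+1 else (hdist x y).-1.
Proof.
rewrite /hdist.
have Hi : (i \in [set k | x k != y k]) = (x i != y i) by rewrite inE.
case: ifP => Hxy.
- have -> : [set k | x k != flip y i k] = i |: [set k | x k != y k].
    apply/setP=> k; rewrite !inE flipE; case: (k =P i) => [->|] /=.
      by rewrite (eqP Hxy); case: (y i).
    by [].
  by rewrite cardsU1 Hi Hxy.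
- have -> : [set k | x k != flip y i k] = [set k | x k != y k] :\ i.
    apply/setP=> k; rewrite !inE flipE; case: (k =P i) => [->|] /=.
      by move: Hxy; case: (x i); case: (y i).
    by [].
  by rewrite (cardsD1 i [set k | x k != y k]) Hi Hxy.
Qed.

Lemma hdist1P y z : reflect (exists i, y = flip z i) (hdist y z == 1).
Proof.
apply: (iffP idP).
- move/cards1P => [i Hi]; exists i; apply/ffunP=> k; rewrite flipE.
  move/setP: Hi => /(_ k); rewrite !inE.
  case: (k =P i) => [->|_] /=.
    by case: (y i); case: (z i).
  by move/negbFE/eqP.
- by case=> i ->; rewrite hdist_sym hdist_flip eqxx hdist0.
Qed.

Lemma inC (Z : {set word}) y :
  reflect (exists2 z, z \in Z & hdist y z == 1) (y \in \bigcup_(z in Z) sphere z).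
Proof.
apply: (iffP bigcupP) => [[z Hz]|[z Hz H]]; rewrite ?inE; exists z => //.
by rewrite inE.
Qed.

Theorem lemma8 (C : {set word}) (c : nat) :
  union_of_spheres C ->
  perfect_coloring C (20 + c) (256 - c) c (276 - c) ->
  (3 %| c) \/ 25 <= c.
Proof.
move=> [Z [_ ->]] [sV _ nV HC HnC].
set C' := \bigcup_(z in Z) sphere z in sV nV HC HnC *.
case: (boolP [exists y, exists z1, exists z2,
   [&& y \in C', z1 \in Z, z2 \in Z, z1 != z2, hdist y z1 == 1 & hdist y z2 == 1]]).
- move/existsP=> [y /existsP [z1 /existsP [z2 /and5P [Hy Hz1 Hz2 Hne /andP [H1 H2]]]]].
  right. have [Ha _] := HC y Hy. rewrite -(leq_add2l 20) -Ha.
  have /hdist1P [i Ei] := H1. have /hdist1P [j Ej] := H2.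
  have Hij : i != j.
    apply/eqP=> Eij; move/eqP: Hne; apply.
    by rewrite -(flipK z1 i) -Ei Ej Eij flipK.
  set A := [set flip z1 k | k in ~: [set i]].
  set B := [set flip z2 k | k in ~: [set i; j]].
  have cA : #|A| = 23 by rewrite card_imset ?cardsC1 ?card_ord //; apply: flip_inj.
  have cB : #|B| = 22.
    rewrite card_imset; last by apply: flip_inj.
    have := cardsC [set i; j]; rewrite cards2 Hij card_ord => H.
    by apply/eqP; rewrite -(eqn_add2l 2) H.
  have dAB : A :&: B = set0.
    apply/setP=> w; rewrite !inE; apply/negbTE/andP.
    move=> [/imsetP [k Hk ->] /imsetP [k' Hk' E]].
    move: Hk Hk'; rewrite !inE negb_or => Hk /andP [Hk1 _].
    move/ffunP/(_ i): E; rewrite !flipE eq_sym (negbTE Hk) eq_sym (negbTE Hk1).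
    move/ffunP/(_ i): Ei; move/ffunP/(_ i): Ej; rewrite !flipE eqxx (negbTE Hij).
    by move=> -> ->; case: (z1 i); case: (z2 i).
  apply: (leq_trans _ (subset_leq_card (_ : A :|: B \subset _))).
    by rewrite cardsU dAB cards0 cA cB.
  apply/subsetP=> w; rewrite !inE => /orP [/imsetP [k Hk ->] | /imsetP [k Hk ->]];
    apply/andP; split.
  + apply/inC; exists z1 => //; apply/hdist1P; by exists k.
  + move: Hk; rewrite !inE => Hk.
    rewrite /adj hdist_flip (eqP H1) Ei flipE (negbTE Hk) eqxx //.
  + apply/inC; exists z2 => //; apply/hdist1P; by exists k.
  + move: Hk; rewrite !inE negb_or => /andP [_ Hk].
    rewrite /adj hdist_flip (eqP H2) Ej flipE (negbTE Hk) eqxx //.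
- rewrite negb_exists => /forallP Hno. left.
  have [x Hx] : exists x, x \in V :\: C'.
    apply/set0Pn; rewrite setD_eq0; apply: contra nV => HV.
    by rewrite eqEsubset sV HV.
  have [HcX _] := HnC x Hx. rewrite -HcX /nbrs_in.
  have HxC : x \notin C' by move: Hx; rewrite inE => /andP [].
  have Huniq : forall y z1 z2, y \in C' -> z1 \in Z -> z2 \in Z ->
      hdist y z1 == 1 -> hdist y z2 == 1 -> z1 = z2.
    move=> y z1 z2 Hy H1 H2 E1 E2; apply/eqP; apply: contraNT (Hno y) => Hne.
    apply/existsP; exists z1; apply/existsP; exists z2; by rewrite Hy H1 H2 Hne E1 E2.
  set N := [set y in C' | adj x y].
  set Z3 := [set z in Z | hdist x z == 3].
  have -> : #|N| = \sum_(z in Z3) 3.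
  { rewrite -sum1_card.
    transitivity (\sum_(y in N) \sum_(z in Z3) ((hdist y z == 1) : nat)).
      apply: eq_bigr => y; rewrite inE => /andP [Hy Ha].
      case/inC: (Hy) => z0 Hz0 E0.
      have Z3z0 : z0 \in Z3.
        rewrite inE Hz0 /=. case/hdist1P: (E0) => i Ei.
        have Ez : z0 = flip y i by rewrite Ei flipK.
        rewrite Ez hdist_flip (eqP Ha); case: ifP => // Hxi.
        exfalso; apply: (negP HxC); apply/inC; exists z0 => //.
        by rewrite Ez hdist_flip (eqP Ha) Hxi.
      rewrite (bigD1 z0) //= E0 big1 ?addn0 // => z /andP [Hz Hne].
      case E: (hdist y z == 1) => //; exfalso; move/eqP: Hne; apply.
      move: Hz; rewrite inE => /andP [Hz _].
      exact: (Huniq y).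
    rewrite exchange_big /=; apply: eq_bigr => z Hz.
    move: Hz; rewrite inE => /andP [HzZ Hz3].
    transitivity (\sum_(y | (y \in N) && (hdist y z == 1)) 1).
      by rewrite big_mkcondr /=; apply: eq_bigr => y _; case: (_ == 1).
    rewrite sum1dep_card.
    have -> : [set y | (y \in N) && (hdist y z == 1)] =
              [set flip z k | k in [set k | x k != z k]].
      apply/setP=> y; rewrite inE; apply/andP/imsetP.
      * move=> [Hy E]; move: Hy; rewrite inE => /andP [_ Ha].
        case/hdist1P: E => k Ey; exists k => //; rewrite inE.
        move: Ha; rewrite Ey /adj hdist_flip (eqP Hz3).
        by case: (x k =P z k).
      * move=> [k Hk ->]; split; last by apply/hdist1P; exists k.
        rewrite inE; apply/andP; split.
          by apply/inC; exists z => //; apply/hdist1P; exists k.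
        rewrite inE in Hk.
        by rewrite /adj hdist_flip (eqP Hz3) (negbTE Hk).
    rewrite card_imset; last by apply: flip_inj.
    exact: (eqP Hz3). }
  rewrite sum_nat_const; exact: dvdn_mull (dvdnn 3).
Qed.
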